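(* For integers $n \geq j \geq k \geq 0$, $$f_{(n,j,k),j+k}(q) = q^{j^2+jk+k^2} \left( \begin{bmatrix} n \\ j \end{bmatrix}_q \begin{bmatrix} n \\ k \end{bmatrix}_q - q^{j-k+1} \begin{bmatrix} n \\ j+1 \end{bmatrix}_q \begin{bmatrix} n \\ k-1 \end{bmatrix}_q \right).$$
   Context: For a partition $\lambda\vdash N$, a standard Young tableau of shape $\lambda$ is a filling of the Ferrers diagram with $1,\dots,N$, increasing along rows and down columns; it has a descent at $m$ if $m+1$ lies in a strictly lower row than $m$; $\mathrm{des}$ is the number of descents and $\mathrm{maj}$ their sum. $f_{\lambda,i}(q)=\sum q^{\mathrm{maj}(\tau)}$ over standard Young tableaux of shape $\lambda$ with $\mathrm{des}(\tau)=i$. The $q$-binomial coefficient is $\frac{(q)_M}{(q)_N(q)_{M-N}}$, $(q)_m=(1-q)\cdots(1-q^m)$, for integers $0\le N\le M$, and $0$ otherwise. *)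

(* Defs.v *)
From HB Require Import structures.
From mathcomp Require Import all_boot all_order all_algebra.
Set Implicit Arguments. Unset Strict Implicit. Unset Printing Implicit Defensive.
Import Order.TTheory GRing.Theory Num.Theory.
Local Open Scope ring_scope.

(* A partition is given as a weakly decreasing list of parts la = [:: la_1; la_2; ...].
   Ferrers diagram in English convention: row i (0-based, top to bottom) has
   cells (i, c) for c < la_i. *)
Definition nrows (la : seq nat) : nat := size la.
Definition ncols (la : seq nat) : nat := head 0%N la.
Definition size_of (la : seq nat) : nat := sumn la.
Definition box (la : seq nat) : finType := ('I_(nrows la) * 'I_(ncols la))%type.
Definition in_diagram (la : seq nat) (x : box la) : bool := (x.2 < nth 0 la x.1)%N.

(* A filling: each box position gets a value in {0..N}; cells of the diagram
   get the entries 1..N, positions outside the diagram get 0 (dummy). *)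
Definition filling (la : seq nat) := {ffun box la -> 'I_(size_of la).+1}.

Definition is_SYT (la : seq nat) (T : filling la) : bool :=
  [&& [forall x, ~~ in_diagram x ==> (T x == 0 :> nat)],
      [forall x, in_diagram x ==> (0 < T x)%N],
      [forall x, forall y, (in_diagram x && in_diagram y && (T x == T y)) ==> (x == y)],
      [forall x, forall y, (in_diagram x && in_diagram y && (x.1 == y.1 :> nat)
                            && (x.2 < y.2)%N) ==> (T x < T y)%N] &
      [forall x, forall y, (in_diagram x && in_diagram y && (x.2 == y.2 :> nat)
                            && (x.1 < y.1)%N) ==> (T x < T y)%N]].

Definition row_of (la : seq nat) (T : filling la) (m : nat) : nat :=
  if [pick x | in_diagram x && (T x == m :> nat)] is Some x then (x.1 : nat) else 0%N.

Definition is_descent (la : seq nat) (T : filling la) (m : nat) : bool :=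
  (row_of T m < row_of T m.+1)%N.

Definition descents (la : seq nat) (T : filling la) : seq nat :=
  [seq m <- iota 1 (size_of la).-1 | is_descent T m].

Definition des (la : seq nat) (T : filling la) : nat := size (descents T).
Definition maj (la : seq nat) (T : filling la) : nat := sumn (descents T).

Definition f_poly (la : seq nat) (i : nat) : {poly int} :=
  \sum_(T : filling la | is_SYT T && (des T == i)) 'X^(maj T).

Definition qpoch (m : nat) : {poly int} := \prod_(i < m) (1 - 'X^(i.+1)).

(* The division is exact polynomial division (the divisor has
   leading coefficient +-1, a unit of int). *)
Definition qbinom (M N : int) : {poly int} :=
  if (0 <= N) && (N <= M) then
    qpoch `|M|%N %/ (qpoch `|N|%N * qpoch `|M - N|%N)
  else 0.

(* Main.v *)
Require Import Defs.
From HB Require Import structures.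
From mathcomp Require Import all_boot all_order all_algebra.
From mathcomp Require Import ring lra zify.
Import Order.TTheory GRing.Theory Num.Theory.

Module PA.
Import Order.TTheory GRing.Theory Num.Theory.
Local Open Scope ring_scope.

Fixpoint qb (n m : nat) : {poly int} :=
  match n, m with
  | _, 0%N => 1
  | 0%N, _.+1 => 0
  | n'.+1, m'.+1 => 'X^(n' - m') * qb n' m' + qb n' m'.+1
  end.

Lemma qb_gt n m : (n < m)%N -> qb n m = 0.
Proof.
elim: n m => [|n IH] [|m] //= H.
by rewrite !IH ?mulr0 ?addr0 //; lia.
Qed.

Lemma qpochS m : qpoch m.+1 = qpoch m * (1 - 'X^(m.+1)).
Proof. by rewrite /qpoch big_ord_recr. Qed.

Lemma qpoch0 : qpoch 0 = 1.
Proof. by rewrite /qpoch big_ord0. Qed.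

Lemma qb_id n m : (m <= n)%N -> qb n m * (qpoch m * qpoch (n - m)) = qpoch n.
Proof.
elim: n m => [|n IH] [|m] //= H.
- by rewrite qpoch0 !mul1r.
- by rewrite qpoch0 !mul1r subn0.
- rewrite subSS qpochS.
  have E1 : 'X^(n.+1) = 'X^(n - m) * 'X^(m.+1) :> {poly int}.
    by rewrite -exprD; congr ('X^ _); lia.
  case: (ltnP m n) => Hmn.
  + have E2 : (n - m = (n - m.+1).+1)%N by lia.
    have I1 := IH m (ltnW Hmn). have I2 := IH m.+1 Hmn.
    rewrite qpochS in I2.
    have Q : qpoch (n - m) = qpoch (n - m.+1) * (1 - 'X^(n - m)).
      by rewrite [in LHS]E2 qpochS -E2.
    rewrite (qpochS n) E1.
    transitivity ('X^(n - m) * (qb n m * (qpoch m * qpoch (n - m))) * (1 - 'X^(m.+1))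
       + (qb n m.+1 * (qpoch m * (1 - 'X^(m.+1)) * qpoch (n - m.+1))) * (1 - 'X^(n-m))).
      by rewrite !Q; ring.
    rewrite I2 I1. ring.
  + have -> : m = n by lia.
    rewrite (@qb_gt n n.+1 (ltnSn n)) addr0 subnn qpoch0 expr0 mul1r mulr1 qpochS.
    by rewrite -{2}(IH n (leqnn n)) subnn qpoch0 mulr1 mulrA.
Qed.

Lemma lead_qpoch m : lead_coef (qpoch m) = (-1) ^+ m.
Proof.
elim: m => [|m IH]; first by rewrite qpoch0 lead_coef1.
have L : lead_coef (1 - 'X^(m.+1) : {poly int}) = -1.
  rewrite addrC lead_coefDl ?lead_coefN ?lead_coefXn //.
  by rewrite size_polyN size_polyXn size_poly1.
by rewrite qpochS lead_coefM IH L exprSr.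
Qed.

Lemma qbinom_nat n m : qbinom n%:Z m%:Z = qb n m.
Proof.
rewrite /qbinom; case: (leqP m n) => H.
- have -> : (0 <= m%:Z) && (m%:Z <= n%:Z) by rewrite lez_nat H.
  have -> : `|(n%:Z - m%:Z)|%N = (n - m)%N.
    by rewrite subzn // absz_nat.
  rewrite !absz_nat -(@qb_id n m H) Pdiv.IdomainUnit.mulpK //.
  by rewrite lead_coefM !lead_qpoch -exprD unitrX // unitrN1.
- rewrite qb_gt //.
  have -> : (m%:Z <= n%:Z) = false by rewrite lez_nat leqNgt H.
  by rewrite andbF.
Qed.

Lemma qbinom_neg n : qbinom n%:Z (-1) = 0.
Proof. by []. Qed.

End PA.
Import PA.

Module PB.
Import Order.TTheory GRing.Theory Num.Theory.
Local Open Scope ring_scope.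

Definition qbm n k := if k is k'.+1 then qb n k' else 0.
Definition Rp n j k := qb n j * qb n k - 'X^(j.+1 - k) * qb n j.+1 * qbm n k.

Lemma qbS n m : qb n.+1 m.+1 = 'X^(n - m) * qb n m + qb n m.+1.
Proof. by []. Qed.
Lemma qb0 n : qb n 0 = 1.
Proof. by case: n. Qed.

Lemma Rp_rec n j k : (k <= j)%N -> (j <= n.+1)%N ->
  Rp n.+1 j k = Rp n j k
   + (if j is j'.+1 then 'X^(n - j') * Rp n j' k else 0)
   + (if k is k'.+1 then 'X^(n - k') * Rp n j k' else 0)
   + (if j is j'.+1 then if k is k'.+1 then 'X^(n - j' + (n - k')) * Rp n j' k' else 0 else 0).
Proof.
case: j => [|j'] /=.
  rewrite leqn0 => /eqP -> _.
  by rewrite /Rp /qbm !qb0 !mulr0 !addr0.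
case: k => [|k'] Hk Hj.
  rewrite /Rp /qbm !qb0 !mulr0 !subr0 !mulr1 !addr0 qbS; ring.
have Hkj : (k' <= j')%N by [].
have Hjn : (j' <= n)%N by [].
have [g Hg] : exists g, (j' - k')%N = g by eexists.
have e1 : (j'.+2 - k'.+1 = g.+1)%N by lia.
have e2 : (j'.+1 - k'.+1 = g)%N by lia.
have e3 : (j'.+2 - k' = g.+2)%N by lia.
have e4 : (j'.+1 - k' = g.+1)%N by lia.
have [[|d] Ed] : exists d, (n - j')%N = d by eexists.
- have En : n = j' by lia.
  have e5 : (n - k' = g)%N by lia.
  have e6 : (n - j'.+1 = 0)%N by lia.
  rewrite /Rp /qbm !qbS e1 e2 e3 e4 e5 e6 Ed.
  rewrite En (@qb_gt j' j'.+1) ?(@qb_gt j' j'.+2) //.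
  case: k' Hk Hkj Hg e1 e2 e3 e4 e5 => [|k''] Hk Hkj Hg e1 e2 e3 e4 e5.
  + rewrite !qb0 add0n !exprS. ring.
  + rewrite qbS.
    have e7 : (j' - k'' = g.+1)%N by lia.
    rewrite e7 add0n !exprS. ring.
- have e5 : (n - k' = (d + g).+1)%N by lia.
  have e6 : (n - j'.+1 = d)%N by lia.
  rewrite /Rp /qbm !qbS e1 e2 e3 e4 e5 e6 Ed.
  case: k' Hk Hkj Hg e1 e2 e3 e4 e5 => [|k''] Hk Hkj Hg e1 e2 e3 e4 e5.
  + rewrite !qb0 !(exprS, exprD). ring.
  + rewrite qbS.
    have e7 : (n - k'' = (d + g).+2)%N by lia.
    rewrite e7 !(exprS, exprD). ring.
Qed.

End PB.
Import PB.

Module PC.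
Import Order.TTheory GRing.Theory Num.Theory.

Definition stp (s : option (nat * nat * nat)) (a : nat) : option (nat * nat * nat) :=
  match s with
  | Some (x, y, z) =>
      if a == 0 then Some (x.+1, y, z)
      else if a == 1 then (if y < x then Some (x, y.+1, z) else None)
      else if a == 2 then (if z < y then Some (x, y, z.+1) else None)
      else None
  | None => None
  end.

Definition st (w : seq nat) := foldl stp (Some (0, 0, 0)) w.

Lemma st_rcons u a : st (rcons u a) = stp (st u) a.
Proof. by rewrite /st foldl_rcons. Qed.

Definition desc (w : seq nat) := [seq m <- iota 1 (size w).-1 | nth 0 w m.-1 < nth 0 w m].
Definition desw w := size (desc w).
Definition majw w := sumn (desc w).

Lemma desc_rcons u a : desc (rcons u a) =
  desc u ++ (if (0 < size u) && (last 0 u < a) then [:: size u] else [::]).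
Proof.
rewrite /desc size_rcons.
have [->|Hu] := eqVneq u [::]; first by [].
have Hs : 0 < size u by rewrite lt0n size_eq0.
have I : iota 1 (size u) = iota 1 (size u).-1 ++ [:: size u].
  have -> : [:: size u] = iota (1 + (size u).-1) 1 by rewrite /= add1n (prednK Hs).
  by rewrite -iotaD addn1 (prednK Hs).
rewrite Hs /= I filter_cat.
congr (_ ++ _).
  apply: eq_in_filter => m; rewrite mem_iota => /andP [H1 H2].
  rewrite !nth_rcons.
  have -> : m < size u by lia.
  by have -> : m.-1 < size u by lia.
rewrite /= !nth_rcons ltnn eqxx.
have -> : (size u).-1 < size u by lia.
by rewrite (last_nth 0); case: u Hu Hs I.
Qed.

Lemma desw_rcons u a : desw (rcons u a) = desw u + ((0 < size u) && (last 0 u < a)).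
Proof. by rewrite /desw desc_rcons size_cat; case: ifP. Qed.

Lemma majw_rcons u a : majw (rcons u a) =
  majw u + (if (0 < size u) && (last 0 u < a) then size u else 0).
Proof. by rewrite /majw desc_rcons sumn_cat; case: ifP => //= _; rewrite addn0. Qed.

Lemma st_inv w x y z : st w = Some (x, y, z) ->
  [/\ z <= y <= x, size w = x + y + z & desw w <= y + z].
Proof.
elim/last_ind: w x y z => [|u a IH] x y z.
  by rewrite /st /= => [[<- <- <-]].
rewrite st_rcons size_rcons desw_rcons.
case E: (st u) => [[[x' y'] z']|] //=.
have [/andP[H1 H2] Hs Hd] := IH _ _ _ E.
case: ifP => [/eqP -> [<- <- <-]|_]. by rewrite Hs; split => //; lia.
case: ifP => [/eqP -> |_]. case: ifP => // Hl [<- <- <-].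
  by rewrite Hs; split => //; lia.
case: ifP => [/eqP -> |_] //. case: ifP => // Hl [<- <- <-].
by rewrite Hs; split => //; lia.
Qed.

Fixpoint allw (N : nat) : seq (seq nat) :=
  if N is N'.+1 then [seq rcons u a | u <- allw N', a <- iota 0 3] else [:: [::]].

Local Open Scope ring_scope.

Lemma big_allwS N (P : pred (seq nat)) (g : seq nat -> {poly int}) :
  \sum_(w <- allw N.+1 | P w) g w =
  \sum_(u <- allw N) ((if P (rcons u 0%N) then g (rcons u 0%N) else 0)
                    + (if P (rcons u 1%N) then g (rcons u 1%N) else 0)
                    + (if P (rcons u 2%N) then g (rcons u 2%N) else 0)).
Proof.
rewrite big_mkcond (_ : allw N.+1 = [seq rcons u a | u <- allw N, a <- iota 0 3]) // big_allpairs_dep; apply: eq_bigr => u _.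
by rewrite !big_cons big_nil /= addr0 addrA.
Qed.

Definition Fw (n j k : nat) : {poly int} :=
  \sum_(w <- allw (n + j + k) | (st w == Some (n, j, k)) && (desw w == j + k)%N) 'X^(majw w).

Definition Hw (x y z : nat) (Q : pred nat) : {poly int} :=
  \sum_(w <- allw (x + y + z) | [&& st w == Some (x, y, z), desw w == (y + z)%N,
                                    (0 < size w)%N & Q (last 0%N w)]) 'X^(majw w).

Lemma stp0 s x y z : (stp s 0%N == Some (x.+1, y, z)) = (s == Some (x, y, z)).
Proof. by case: s => [[[a b] c]|] //=; apply/eqP/eqP => [[-> -> ->]|[-> -> ->]]. Qed.
Lemma stp1 s x y z : (stp s 1%N == Some (x, y.+1, z)) = (s == Some (x, y, z)) && (y < x)%N.
Proof.
case: s => [[[a b] c]|] //=; case: ifP => H.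
  by apply/eqP/andP => [[<- <- <-]|[/eqP[<- <- <-]]] //; rewrite eqxx H.
by apply/eqP/andP => // -[/eqP[<- <- <-]]; rewrite H.
Qed.
Lemma stp1' s x z : (stp s 1%N == Some (x, 0%N, z)) = false.
Proof. by case: s => [[[a b] c]|] //=; case: ifP => // _; apply/eqP => -[]. Qed.
Lemma stp2 s x y z : (stp s 2%N == Some (x, y, z.+1)) = (s == Some (x, y, z)) && (z < y)%N.
Proof.
case: s => [[[a b] c]|] //=; case: ifP => H.
  by apply/eqP/andP => [[<- <- <-]|[/eqP[<- <- <-]]] //; rewrite eqxx H.
by apply/eqP/andP => // -[/eqP[<- <- <-]]; rewrite H.
Qed.
Lemma stp2' s x y : (stp s 2%N == Some (x, y, 0%N)) = false.
Proof. by case: s => [[[a b] c]|] //=; case: ifP => // _; apply/eqP => -[]. Qed.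

Lemma Hw_rec n y z Q :
  Hw n.+1 y z Q =
    (if Q 0%N then Fw n y z else 0)
  + (if Q 1%N then (if y is y'.+1 then
        (if (y' < n.+1)%N then 'X^(n.+1 + y' + z) * Hw n.+1 y' z (pred1 0%N) else 0) else 0) else 0)
  + (if Q 2%N then (if z is z'.+1 then
        (if (z' < y)%N then 'X^(n.+1 + y + z') * Hw n.+1 y z' (fun b => b < 2)%N else 0) else 0) else 0).
Proof.
rewrite /Hw (_ : (n.+1 + y + z = (n + y + z).+1)%N) ?big_allwS; last by lia.
rewrite !big_split /=; congr (_ + _ + _).
- rewrite /Fw; case HQ: (Q 0%N); last by rewrite big1 // => u _; rewrite last_rcons HQ !andbF.
  rewrite [RHS]big_mkcond; apply: eq_bigr => u _.
  rewrite st_rcons stp0 desw_rcons majw_rcons size_rcons last_rcons /= ltn0 !andbF !addn0.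
  by rewrite HQ andbT.
- case HQ: (Q 1%N); last by rewrite big1 // => u _; rewrite last_rcons HQ !andbF.
  case: y => [|y']; first by rewrite big1 // => u _; rewrite st_rcons stp1'.
  case: ifP => Hy; last first.
    by rewrite big1 // => u _; rewrite st_rcons stp1 Hy andbF.
  rewrite (_ : (n + y'.+1 + z = n.+1 + y' + z)%N); last by lia.
  rewrite big_distrr [RHS]big_mkcond; apply: eq_bigr => u _.
  rewrite st_rcons stp1 Hy andbT desw_rcons majw_rcons size_rcons last_rcons HQ /= andbT.
  case E: (st u == _) => //=.
  have [_ Hs Hd] := st_inv _ _ _ _ (eqP E).
  have -> : (0 < size u)%N = true by rewrite Hs; lia.
  rewrite /=; case: (last 0%N u) => [|l] /=.
    rewrite addn1 addSn eqSS eqxx andbT Hs exprD; case: eqP => // _; exact: mulrC.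
  by rewrite addn0 andbF; case: eqP => //; lia.
- case HQ: (Q 2%N); last by rewrite big1 // => u _; rewrite last_rcons HQ !andbF.
  case: z => [|z']; first by rewrite big1 // => u _; rewrite st_rcons stp2'.
  case: ifP => Hz; last first.
    by rewrite big1 // => u _; rewrite st_rcons stp2 Hz andbF.
  rewrite (_ : (n + y + z'.+1 = n.+1 + y + z')%N); last by lia.
  rewrite big_distrr [RHS]big_mkcond; apply: eq_bigr => u _.
  rewrite st_rcons stp2 Hz andbT desw_rcons majw_rcons size_rcons last_rcons HQ /= andbT.
  case E: (st u == _) => //=.
  have [_ Hs Hd] := st_inv _ _ _ _ (eqP E).
  have -> : (0 < size u)%N = true by rewrite Hs; lia.
  rewrite /=; case: ltnP => Hl /=.
    rewrite addn1 addnS eqSS andbT Hs exprD; case: eqP => // _; exact: mulrC.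
  by rewrite addn0 andbF; case: eqP => //; lia.
Qed.

End PC.
Import PC.

Module PD.
Import Order.TTheory GRing.Theory Num.Theory.
Local Open Scope ring_scope.

Lemma Fw_Hw n y z : Fw n.+1 y z = Hw n.+1 y z predT.
Proof.
rewrite /Fw /Hw; apply: eq_bigl => w.
case E: (st w == _) => //=; rewrite andbT.
have [_ Hs _] := st_inv _ _ _ _ (eqP E).
by rewrite Hs addSn addSn /= andbT.
Qed.

Lemma Fw_rec n j k : (k <= j)%N -> (j <= n.+1)%N ->
  Fw n.+1 j k = Fw n j k
   + (if j is j'.+1 then 'X^(n.+1 + j' + k) * Fw n j' k else 0)
   + (if k is k'.+1 then 'X^(n.+1 + j + k') *
        (Fw n j k' + (if j is j'.+1 then 'X^(n.+1 + j' + k') * Fw n j' k' else 0))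
      else 0).
Proof.
move=> Hkj Hjn.
rewrite Fw_Hw Hw_rec /=; congr (_ + _ + _).
- case: j Hkj Hjn => [|j'] // Hkj Hjn.
  by rewrite Hjn Hw_rec /= !addr0.
- case: k Hkj => [|k'] // Hkj.
  rewrite Hkj Hw_rec /=.
  case: j Hkj Hjn => [|j'] Hkj Hjn; first by rewrite !addr0.
  by rewrite Hjn Hw_rec /= !addr0.
Qed.

Lemma Fw_zero n j k : ~~ ((k <= j)%N && (j <= n)%N) -> Fw n j k = 0.
Proof.
move=> H; rewrite /Fw big1 // => w /andP [/eqP E _].
have [/andP [H1 H2] _ _] := st_inv _ _ _ _ E.
by move: H; rewrite H1 H2.
Qed.

Definition E2 (a b : nat) := (a ^ 2 + a * b + b ^ 2)%N.

Lemma Fw_Rp n j k : (k <= j.+1)%N -> (j <= n.+1)%N -> Fw n j k = 'X^(E2 j k) * Rp n j k.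
Proof.
elim: n j k => [|n IH] j k Hk Hj.
- case: (boolP ((k <= j)%N && (j <= 0)%N)) => [/andP [H1 H2]|H]; last first.
    rewrite Fw_zero //.
    have [->|Hj1] := eqVneq j 1%N.
      rewrite /Rp (@qb_gt 0 1) // (@qb_gt 0 2) //; ring.
    have -> : k = j.+1 by lia.
    rewrite /Rp /qbm subnn; ring.
  have -> : j = 0%N by lia.
  have -> : k = 0%N by lia.
  by rewrite /Fw /= big_cons big_nil /Rp /qbm /= /majw /desw /= !mulr0 subr0 !mulr1 addr0.
- case: (boolP ((k <= j)%N && (j <= n.+1)%N)) => [/andP [H1 H2]|H]; last first.
    rewrite Fw_zero //.
    have [->|Hj1] := eqVneq j n.+2.
      rewrite /Rp (@qb_gt n.+1 n.+2) // (@qb_gt n.+1 n.+3) //; ring.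
    have -> : k = j.+1 by lia.
    rewrite /Rp /qbm subnn; ring.
  rewrite Fw_rec // Rp_rec //.
  case: j Hk Hj H1 H2 => [|j'] Hk Hj H1 H2.
  + have -> : k = 0%N by lia.
    rewrite IH //= !addr0; ring.
  + case: k Hk H1 => [|k'] Hk H1.
    * rewrite !IH // !addr0 mulrA -exprD.
      have -> : (n.+1 + j' + 0 + E2 j' 0 = E2 j'.+1 0 + (n - j'))%N.
        rewrite /E2; nia.
      rewrite exprD; ring.
    * rewrite !IH //; try lia.
      move: (Rp n j'.+1 k'.+1) (Rp n j' k'.+1) (Rp n j'.+1 k') (Rp n j' k') => r1 r2 r3 r4.
      have e1 : 'X^(n.+1 + j'.+1 + k') * 'X^(n.+1 + j' + k') * 'X^(E2 j' k') =
                'X^(E2 j'.+1 k'.+1) * 'X^(n - j' + (n - k')) :> {poly int}.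
        rewrite -!exprD; congr ('X^ _); rewrite /E2; nia.
      have e2 : 'X^(n.+1 + j'.+1 + k') * 'X^(E2 j'.+1 k') =
                'X^(E2 j'.+1 k'.+1) * 'X^(n - k') :> {poly int}.
        rewrite -!exprD; congr ('X^ _); rewrite /E2; nia.
      have e3 : 'X^(n.+1 + j' + k'.+1) * 'X^(E2 j' k'.+1) =
                'X^(E2 j'.+1 k'.+1) * 'X^(n - j') :> {poly int}.
        rewrite -!exprD; congr ('X^ _); rewrite /E2; nia.
      rewrite !mulrDr !mulrA e1 e2 e3; ring.
Qed.

End PD.
Import PD.

Module PE1.
Import Order.TTheory GRing.Theory Num.Theory.

Definition occ (r : nat) (w : seq nat) := [seq i <- iota 0 (size w) | nth 0 w i == r].
Definition cnt r w := size (occ r w).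

Lemma mem_occ r w i : (i \in occ r w) = (i < size w) && (nth 0 w i == r).
Proof. by rewrite mem_filter mem_iota /= add0n andbC. Qed.

Lemma occ_sorted r w : sorted ltn (occ r w).
Proof. apply: sorted_filter; [exact: ltn_trans | exact: iota_ltn_sorted]. Qed.

Lemma occ_uniq r w : uniq (occ r w).
Proof. exact: filter_uniq (iota_uniq _ _). Qed.

Lemma occ_nth_lt r w c : c < cnt r w -> nth 0 (occ r w) c < size w.
Proof. by move=> H; have := mem_nth 0 H; rewrite mem_occ => /andP[]. Qed.

Lemma occ_nth_val r w c : c < cnt r w -> nth 0 w (nth 0 (occ r w) c) = r.
Proof. by move=> H; have := mem_nth 0 H; rewrite mem_occ => /andP[_ /eqP]. Qed.

Lemma occ_rcons u a r :
  occ r (rcons u a) = if a == r then rcons (occ r u) (size u) else occ r u.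
Proof.
rewrite /occ size_rcons -addn1 iotaD filter_cat add0n /= nth_rcons ltnn eqxx.
have -> : [seq i <- iota 0 (size u) | nth 0 (rcons u a) i == r] =
          [seq i <- iota 0 (size u) | nth 0 u i == r].
  by apply: eq_in_filter => i; rewrite mem_iota /= add0n nth_rcons => ->.
by case: (a == r); rewrite ?cats1 ?cats0.
Qed.

Lemma cnt_rcons u a r : cnt r (rcons u a) = cnt r u + (a == r).
Proof. by rewrite /cnt occ_rcons; case: (a == r); rewrite ?size_rcons ?addn1 ?addn0. Qed.

Definition colok w := forall r c, r < 2 -> c < cnt r.+1 w ->
  c < cnt r w /\ nth 0 (occ r w) c < nth 0 (occ r.+1 w) c.

Definition stcond (u : seq nat) (a : nat) :=
  (a == 0) || ((a == 1) && (cnt 1 u < cnt 0 u)) || ((a == 2) && (cnt 2 u < cnt 1 u)).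

Lemma colok_rcons u a : colok u -> stcond u a -> colok (rcons u a).
Proof.
move=> Hu Hc r c Hr.
rewrite /cnt !occ_rcons.
case: eqP => Ear1.
  have Ear : (a == r) = false by apply/eqP; lia.
  rewrite Ear size_rcons ltnS leq_eqVlt => /orP [/eqP Ec | Hlt].
    have Hc' : c < cnt r u.
      subst; move: Hc; rewrite /stcond /cnt; case: r Hr Ear => [|[|r]] //= _ _; by rewrite ?orbF ?orFb.
    split=> //; rewrite nth_rcons Ec ltnn eqxx -Ec.
    exact: occ_nth_lt.
  have [H1 H2] := Hu r c Hr Hlt.
  by split=> //; rewrite nth_rcons Hlt.
move=> Hc1; have [H1 H2] := Hu r c Hr Hc1.
case: (a == r); last by [].
by rewrite size_rcons nth_rcons H1; split=> //; apply: ltnW.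
Qed.

Lemma colok_rcons_inv u a : a < 3 -> colok (rcons u a) -> colok u /\ stcond u a.
Proof.
move=> Ha H; split.
  move=> r c Hr Hc.
  have Hc' : c < cnt r.+1 (rcons u a) by rewrite cnt_rcons; lia.
  have [H1 H2] := H r c Hr Hc'.
  move: H1 H2; rewrite /cnt !occ_rcons.
  case: eqP => Ear.
    have Ear1 : (a == r.+1) = false by apply/eqP; lia.
    rewrite Ear1 size_rcons ltnS leq_eqVlt => /orP [/eqP Ec | Hlt].
      rewrite nth_rcons Ec ltnn eqxx => Hs.
      have := @occ_nth_lt r.+1 u c Hc; rewrite -Ec in Hs; lia.
    by rewrite nth_rcons Hlt.
  case: eqP => Ear1 //.
  by rewrite nth_rcons Hc.
rewrite /stcond; case: a Ha H => [|[|[|a]]] Ha H //=.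
- rewrite orbF; have [] := H 0 (cnt 1 u) erefl; rewrite !cnt_rcons /= ?addn0 ?addn1 //.
- have [] := H 1 (cnt 2 u) erefl; rewrite !cnt_rcons /= ?addn0 ?addn1 //.
Qed.

Lemma colok_nil : colok [::].
Proof. by move=> r c _; rewrite /cnt /occ /=. Qed.

Lemma st_some w s : st w = Some s ->
  [/\ all (fun a => a < 3) w, colok w & s = (cnt 0 w, cnt 1 w, cnt 2 w)].
Proof.
elim/last_ind: w s => [|u a IH] s.
  by rewrite /st /= => [[<-]]; split => //; exact: colok_nil.
rewrite st_rcons; case E: (st u) => [s'|] //.
have [Hall Hcol ->] := IH _ E.
rewrite all_rcons Hall andbT !cnt_rcons.
case: a => [|[|[|a]]] /=.
- move=> [<-]; split => //; first exact: colok_rcons.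
  by rewrite !addn0 addn1.
- case: ifP => // Hl [<-]; split => //.
    by apply: colok_rcons; rewrite /stcond /= ?Hl //.
  by rewrite !addn0 addn1.
- case: ifP => // Hl [<-]; split => //.
    by apply: colok_rcons; rewrite /stcond /= ?Hl ?orbT //.
  by rewrite !addn0 addn1.
- by [].
Qed.

Lemma st_of_colok w : all (fun a => a < 3) w -> colok w ->
  st w = Some (cnt 0 w, cnt 1 w, cnt 2 w).
Proof.
elim/last_ind: w => [|u a IH]; first by [].
rewrite all_rcons => /andP [Ha Hall] Hc.
have [Hcu Hs] := colok_rcons_inv _ _ Ha Hc.
rewrite st_rcons (IH Hall Hcu) !cnt_rcons.
move: Hs; rewrite /stcond.
case: a Ha Hc => [|[|[|a]]] //= _ _.
- by rewrite !addn0 addn1.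
- by rewrite orbF => ->; rewrite !addn0 addn1.
- by move=> ->; rewrite !addn0 addn1.
Qed.

End PE1.
Import PE1.

Module PE2.
Import Order.TTheory GRing.Theory Num.Theory.
Set Implicit Arguments. Unset Strict Implicit.

Lemma mem_allw N w : (w \in allw N) = (size w == N) && all (fun a => a < 3) w.
Proof.
elim: N w => [|N IH] w.
  by case: w.
have -> : allw N.+1 = [seq rcons u a | u <- allw N, a <- iota 0 3] by [].
elim/last_ind: w => [|u a _].
  apply/negbTE/allpairsP => -[[u a] [_ _ /= E]]; by move: E; case: u.
rewrite size_rcons eqSS all_rcons andbCA -IH.
apply/allpairsP/andP => [[[u' a'] [/= H1 H2 /rcons_inj [-> ->]]] | [Ha Hu]].
  by split=> //; move: H2; rewrite !inE; case/or3P => /eqP ->.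
by exists (u, a); split => //; rewrite mem_iota.
Qed.

Lemma uniq_allw N : uniq (allw N).
Proof.
elim: N => [|N IH] //.
have -> : allw N.+1 = [seq rcons u a | u <- allw N, a <- iota 0 3] by [].
apply: allpairs_uniq => //; try exact: iota_uniq.
by move=> [u a] [v b] _ _ /= /rcons_inj [-> ->].
Qed.

Local Open Scope ring_scope.

Lemma reindex_sum (I : finType) (A : pred I) (f : I -> seq nat) (s : seq (seq nat))
   (P : pred (seq nat)) (G : seq nat -> {poly int}) :
  uniq s -> {in A &, injective f} ->
  (forall x, A x -> (f x \in s) && P (f x)) ->
  (forall w, w \in s -> P w -> exists2 x, A x & f x = w) ->
  \sum_(x | A x) G (f x) = \sum_(w <- s | P w) G w.
Proof.
move=> Us Inj H1 H2.
rewrite -[RHS]big_filter.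
have Hp : perm_eq [seq f x | x <- enum A] [seq w <- s | P w].
  apply: uniq_perm.
  - rewrite map_inj_in_uniq ?enum_uniq //.
    by move=> x y; rewrite !mem_enum; apply: Inj.
  - exact: filter_uniq.
  move=> w; rewrite mem_filter; apply/mapP/andP.
    by move=> [x]; rewrite mem_enum => /H1 /andP [Hs HP] ->.
  by move=> [HP Hs]; have [x Hx <-] := H2 w Hs HP; exists x; rewrite ?mem_enum.
by rewrite -(perm_big _ Hp) big_map big_enum.
Qed.

Local Close Scope ring_scope.

Definition phi (la : seq nat) (T : filling la) : seq nat :=
  [seq row_of T m | m <- iota 1 (size_of la)].

Lemma size_phi la (T : filling la) : size (phi T) = size_of la.
Proof. by rewrite size_map size_iota. Qed.

Lemma nth_phi la (T : filling la) i : i < size_of la -> nth 0 (phi T) i = row_of T i.+1.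
Proof. by move=> H; rewrite (nth_map 0) ?size_iota // nth_iota. Qed.

Lemma descents_phi la (T : filling la) : descents T = desc (phi T).
Proof.
rewrite /descents /desc size_phi; apply: eq_in_filter => m.
rewrite mem_iota => /andP [H1 H2].
rewrite /is_descent !nth_phi; try lia.
by rewrite prednK.
Qed.

Lemma sum_ltn m a : \sum_(i < m) (i < a) = minn a m.
Proof.
elim: m => [|m IH]; first by rewrite big_ord0 minn0.
rewrite big_ord_recr /= IH; lia.
Qed.

End PE2.
Import PE2.

Module PE3.
Import Order.TTheory GRing.Theory Num.Theory.
Set Implicit Arguments. Unset Strict Implicit.


Lemma SYT_out la (T : filling la) x : is_SYT T -> ~~ in_diagram x -> T x = 0 :> nat.
Proof. by case/and5P => /forallP /(_ x) /implyP H _ _ _ _ /H /eqP. Qed.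

Lemma SYT_pos la (T : filling la) x : is_SYT T -> in_diagram x -> 0 < T x.
Proof. by case/and5P => _ /forallP /(_ x) /implyP H _ _ _ /H. Qed.

Lemma SYT_inj la (T : filling la) x y : is_SYT T -> in_diagram x -> in_diagram y ->
  T x = T y :> nat -> x = y.
Proof.
case/and5P => _ _ /forallP /(_ x) /forallP /(_ y) /implyP H _ _ Hx Hy Exy.
by apply/eqP/H; rewrite Hx Hy; apply/eqP/val_inj.
Qed.

Lemma SYT_row la (T : filling la) x y : is_SYT T -> in_diagram x -> in_diagram y ->
  x.1 = y.1 :> nat -> x.2 < y.2 -> T x < T y.
Proof.
case/and5P => _ _ _ /forallP /(_ x) /forallP /(_ y) /implyP H _ Hx Hy E L.
by apply: H; rewrite Hx Hy E eqxx L.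
Qed.

Lemma SYT_col la (T : filling la) x y : is_SYT T -> in_diagram x -> in_diagram y ->
  x.2 = y.2 :> nat -> x.1 < y.1 -> T x < T y.
Proof.
case/and5P => _ _ _ _ /forallP /(_ x) /forallP /(_ y) /implyP H Hx Hy E L.
by apply: H; rewrite Hx Hy E eqxx L.
Qed.

Lemma row_ofE la (T : filling la) x : is_SYT T -> in_diagram x -> row_of T (T x) = x.1.
Proof.
move=> HT Hx; rewrite /row_of; case: pickP => [y /andP [Hy /eqP E]|H].
  by rewrite (SYT_inj HT Hy Hx E).
by have := H x; rewrite Hx eqxx.
Qed.

Lemma SYT_surj la (T : filling la) : is_SYT T ->
  #|[set x : box la | in_diagram x]| = size_of la ->
  forall m, 0 < m <= size_of la -> exists2 x, in_diagram x & T x = m :> nat.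
Proof.
move=> HT Hc m /andP [H1 H2].
set D := [set x : box la | in_diagram x].
have Hsub : [set T x | x in D] \subset [set~ ord0].
  apply/subsetP => v /imsetP [x]; rewrite inE => Hx ->.
  by rewrite !inE; apply/eqP => /(congr1 val) /= E; have := SYT_pos HT Hx; rewrite E.
have Hcard : #|[set T x | x in D]| = size_of la.
  rewrite card_in_imset ?Hc // => x y; rewrite !inE => Hx Hy E.
  by apply: SYT_inj HT Hx Hy _; rewrite E.
have EQ : [set T x | x in D] = [set~ ord0].
  apply/eqP; rewrite eqEcard Hsub cardsC1 card_ord Hcard /=; lia.
have : (inord m : 'I_(size_of la).+1) \in [set~ ord0].
  by rewrite !inE; apply/eqP => /(congr1 val) /=; rewrite inordK; lia.
rewrite -EQ => /imsetP [x]; rewrite inE => Hx E.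
by exists x => //; rewrite -E inordK //; lia.
Qed.

Definition la3 n j k : seq nat := [:: n.+1; j; k].

Lemma card_diag3 n j k : j <= n.+1 -> k <= n.+1 ->
  #|[set x : box (la3 n j k) | in_diagram x]| = size_of (la3 n j k).
Proof.
move=> Hj Hk.
transitivity (\sum_(r : 'I_3) \sum_(c : 'I_n.+1) ((c : nat) < nth 0 (la3 n j k) r)).
  rewrite pair_bigA -sum1_card big_mkcond /=; apply: eq_bigr => -[r c] _.
  by rewrite inE /in_diagram /=; case: ifP.
under eq_bigr => r _ do rewrite sum_ltn.
rewrite !big_ord_recl big_ord0 /= /size_of /=; lia.
Qed.

Definition cell n j k (r c : nat) : box (la3 n j k) := (inord r, inord c).

Lemma cell1 n j k r c : r < 3 -> (cell n j k r c).1 = r :> nat.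
Proof. by move=> H; rewrite /= inordK. Qed.
Lemma cell2 n j k r c : c < n.+1 -> (cell n j k r c).2 = c :> nat.
Proof. by move=> H; rewrite /= inordK. Qed.
Lemma cellK n j k (x : box (la3 n j k)) : cell n j k x.1 x.2 = x.
Proof. by case: x => a b; rewrite /cell !inord_val. Qed.

Lemma diag_cell n j k r c : j <= n.+1 -> k <= n.+1 -> r < 3 ->
  c < nth 0 (la3 n j k) r -> in_diagram (cell n j k r c).
Proof.
move=> Hj Hk Hr Hc; rewrite /in_diagram cell1 // cell2 //.
by case: r Hr Hc => [|[|[|r]]] //= _; lia.
Qed.

Lemma diag_bound n j k (x : box (la3 n j k)) : in_diagram x -> x.2 < nth 0 (la3 n j k) x.1.
Proof. by []. Qed.

Lemma occ_phi n j k (T : filling (la3 n j k)) r : j <= n.+1 -> k <= n.+1 -> is_SYT T -> r < 3 ->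
  occ r (phi T) = [seq (T (cell n j k r c)).-1 | c <- iota 0 (nth 0 (la3 n j k) r)].
Proof.
move=> Hj Hk HT Hr.
have Hlr : nth 0 (la3 n j k) r <= n.+1 by case: r Hr => [|[|[|r]]].
apply: (irr_sorted_eq ltn_trans ltnn); first exact: occ_sorted.
  apply: (homo_sorted_in (e := ltn) (e' := ltn) (P := fun c => c < nth 0 (la3 n j k) r)).
  - move=> c1 c2 H1 H2 L.
    have D1 := diag_cell Hj Hk Hr H1. have D2 := diag_cell Hj Hk Hr H2.
    have := SYT_row HT D1 D2 (erefl _).
    rewrite !cell2; try lia.
    move=> /(_ L); have := SYT_pos HT D1; lia.
  - by apply/allP => c; rewrite mem_iota.
  - exact: iota_ltn_sorted.
move=> i; rewrite mem_occ size_phi.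
apply/andP/mapP => [[Hi]|[c]].
  rewrite nth_phi //.
  have [x Hx Ex] := SYT_surj HT (card_diag3 Hj Hk) (m := i.+1) ltac:(lia).
  rewrite -Ex row_ofE // => /eqP E1.
  exists (x.2 : nat).
    by rewrite mem_iota add0n -E1.
  have -> : cell n j k r x.2 = x.
    by rewrite -E1 cellK.
  by rewrite Ex.
rewrite mem_iota add0n => Hc ->.
have Dc := diag_cell Hj Hk Hr Hc.
have Hp := SYT_pos HT Dc.
have Hlt := ltn_ord (T (cell n j k r c)).
split; first lia.
by rewrite nth_phi ?prednK ?row_ofE ?cell1 //; lia.
Qed.

Lemma nth_occ_phi n j k (T : filling (la3 n j k)) r c : j <= n.+1 -> k <= n.+1 -> is_SYT T -> r < 3 ->
  c < nth 0 (la3 n j k) r -> (nth 0 (occ r (phi T)) c).+1 = T (cell n j k r c).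
Proof.
move=> Hj Hk HT Hr Hc.
rewrite occ_phi // (nth_map 0) ?size_iota // nth_iota // add0n prednK //.
exact: SYT_pos HT (diag_cell Hj Hk Hr Hc).
Qed.

Lemma cnt_phi n j k (T : filling (la3 n j k)) r : j <= n.+1 -> k <= n.+1 -> is_SYT T -> r < 3 ->
  cnt r (phi T) = nth 0 (la3 n j k) r.
Proof. by move=> Hj Hk HT Hr; rewrite /cnt occ_phi // size_map size_iota. Qed.

Lemma all_phi n j k (T : filling (la3 n j k)) : all (fun a => a < 3) (phi T).
Proof.
apply/allP => a /mapP [m _ ->]; rewrite /row_of.
case: pickP => [x _|_] //.
Qed.

Lemma st_phi n j k (T : filling (la3 n j k)) : k <= j -> j <= n.+1 -> is_SYT T ->
  st (phi T) = Some (n.+1, j, k).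
Proof.
move=> Hkj Hj HT.
have Hk : k <= n.+1 by lia.
rewrite st_of_colok ?all_phi //.
  by rewrite !cnt_phi.
move=> r c Hr; rewrite !cnt_phi //; try lia.
move=> Hc.
have Hc' : c < nth 0 (la3 n j k) r by case: r Hr Hc => [|[|r]] //= _; lia.
split=> //.
have Hr3 : r < 3 by lia.
have Hr3' : r.+1 < 3 by lia.
have E1 := nth_occ_phi Hj Hk HT Hr3 Hc'.
have E2 := nth_occ_phi Hj Hk HT Hr3' Hc.
have D1 := diag_cell Hj Hk Hr3 Hc'.
have D2 := diag_cell Hj Hk Hr3' Hc.
have L : (cell n j k r c).1 < (cell n j k r.+1 c).1 by rewrite !cell1.
have := SYT_col HT D1 D2 (erefl _) L; lia.
Qed.

Lemma phi_inj n j k (T1 T2 : filling (la3 n j k)) : j <= n.+1 -> k <= n.+1 ->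
  is_SYT T1 -> is_SYT T2 -> phi T1 = phi T2 -> T1 = T2.
Proof.
move=> Hj Hk H1 H2 E; apply/ffunP => x; apply: val_inj.
case: (boolP (in_diagram x)) => Hx; last by rewrite /= (SYT_out H1 Hx) (SYT_out H2 Hx).
have Hr : x.1 < 3 by exact: ltn_ord.
have Hc : x.2 < nth 0 (la3 n j k) x.1 := Hx.
by rewrite /= -(cellK x) -!nth_occ_phi // E.
Qed.

Definition psi n j k (w : seq nat) : filling (la3 n j k) :=
  [ffun x => if in_diagram x then inord (nth 0 (occ x.1 w) x.2).+1 else ord0].

Lemma colok_lt w r1 r2 c : colok w -> r1 < r2 -> r2 < 3 -> c < cnt r2 w ->
  c < cnt r1 w /\ nth 0 (occ r1 w) c < nth 0 (occ r2 w) c.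
Proof.
move=> H; case: r2 => [|[|[|r2]]] //; case: r1 => [|[|r1]] // _ _ Hc.
- exact: H 0 c erefl Hc.
- have [H1 H2] := H 1 c erefl Hc.
  have [H3 H4] := H 0 c erefl H1.
  by split=> //; apply: ltn_trans H4 H2.
- exact: H 1 c erefl Hc.
Qed.

Lemma psi_props n j k w : k <= j -> j <= n.+1 -> size w = size_of (la3 n j k) ->
  st w = Some (n.+1, j, k) -> is_SYT (psi n j k w) /\ phi (psi n j k w) = w.
Proof.
move=> Hkj Hj Hs Hst.
have Hk : k <= n.+1 by lia.
have [Hall Hcol [E0 E1 E2]] := st_some _ _ Hst.
have Hcnt : forall r, r < 3 -> cnt r w = nth 0 (la3 n j k) r.
  by case=> [|[|[|r]]] //=.
have Hval : forall x, in_diagram x -> (psi n j k w x : nat) = (nth 0 (occ x.1 w) x.2).+1.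
  move=> x Hx; rewrite ffunE Hx inordK // ltnS -Hs.
  by apply: occ_nth_lt; rewrite Hcnt //; exact: ltn_ord.
have HT : is_SYT (psi n j k w).
  apply/and5P; split.
  - by apply/forallP => x; apply/implyP => Hx; rewrite ffunE (negbTE Hx).
  - by apply/forallP => x; apply/implyP => Hx; rewrite Hval.
  - apply/forallP => x; apply/forallP => y; apply/implyP => /andP [/andP [Hx Hy] /eqP E].
    have := congr1 val E; rewrite /= !Hval // => -[] Ep.
    have Hcx : x.2 < cnt x.1 w by rewrite Hcnt //; exact: ltn_ord.
    have Hcy : y.2 < cnt y.1 w by rewrite Hcnt //; exact: ltn_ord.
    have Er : x.1 = y.1 :> nat.
      by rewrite -(occ_nth_val _ _ _ Hcx) -(occ_nth_val _ _ _ Hcy) Ep.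
    rewrite Er in Hcx Ep.
    have Ec : x.2 = y.2 :> nat.
      by apply/eqP; rewrite -(nth_uniq 0 Hcx Hcy (occ_uniq _ _)) Ep.
    apply/eqP; move: Er Ec; case: x {Hx Hcx E Ep} => a b; case: y {Hy Hcy} => c d /= Er Ec.
    by rewrite (val_inj Er) (val_inj Ec).
  - apply/forallP => x; apply/forallP => y; apply/implyP => /andP [/andP [/andP [Hx Hy] /eqP Er] L].
    rewrite !Hval // -Er ltnS.
    have Hcy : y.2 < cnt x.1 w by rewrite Er Hcnt //; exact: ltn_ord.
    have Hcx : x.2 < cnt x.1 w by rewrite Hcnt //; exact: ltn_ord.
    exact: (sorted_ltn_nth ltn_trans 0 (occ_sorted x.1 w) x.2 y.2 Hcx Hcy L).
  - apply/forallP => x; apply/forallP => y; apply/implyP => /andP [/andP [/andP [Hx Hy] /eqP Ec] L].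
    rewrite !Hval // -Ec ltnS.
    have Hcy : x.2 < cnt y.1 w by rewrite Ec Hcnt //; exact: ltn_ord.
    by have [] := colok_lt Hcol L (ltn_ord _) Hcy.
split => //.
apply: (@eq_from_nth _ 0); first by rewrite size_phi Hs.
move=> i; rewrite size_phi => Hi.
rewrite nth_phi //.
set r := nth 0 w i.
have Hr : r < 3 by apply: (allP Hall); apply: mem_nth; rewrite Hs.
have Hio : i \in occ r w by rewrite mem_occ Hs Hi eqxx.
set c := index i (occ r w).
have Hc : c < cnt r w by rewrite /c index_mem.
have Dx := diag_cell Hj Hk Hr (c := c) ltac:(by rewrite -Hcnt).
have := Hval _ Dx; rewrite cell1 // cell2; last first.
  have Hb : nth 0 (la3 n j k) r <= n.+1 by case: (r) Hr => [|[|[|r']]].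
  by rewrite -Hcnt in Hb; lia.
rewrite nth_index // => <-.
by rewrite row_ofE // cell1.
Qed.

End PE3.
Import PE3.

Module PF.
Import Order.TTheory GRing.Theory Num.Theory.
Set Implicit Arguments. Unset Strict Implicit.
Local Open Scope ring_scope.

Lemma f_poly_Fw n j k : (k <= j)%N -> (j <= n.+1)%N ->
  f_poly (la3 n j k) (j + k) = Fw n.+1 j k.
Proof.
move=> Hkj Hj.
have Hk : (k <= n.+1)%N by lia.
rewrite /f_poly big_mkcondr /=.
have HN : size_of (la3 n j k) = (n.+1 + j + k)%N by rewrite /size_of /= addn0 addnA.
pose G := fun w : seq nat => (if desw w == (j + k)%N then 'X^(majw w) else 0 : {poly int}).
transitivity (\sum_(T : filling (la3 n j k) | is_SYT T) G (phi T)).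
  by apply: eq_bigr => T _; rewrite /des /maj /desw /majw descents_phi.
rewrite (@reindex_sum _ _ _ (allw (size_of (la3 n j k))) (fun w => st w == Some (n.+1, j, k)) G).
- by rewrite /Fw HN big_mkcondr.
- exact: uniq_allw.
- by move=> T1 T2 H1 H2; apply: phi_inj.
- move=> T HT; rewrite mem_allw size_phi eqxx all_phi /=.
  by rewrite st_phi.
- move=> w; rewrite mem_allw => /andP [/eqP Hs _] /eqP Hst.
  have [H1 H2] := psi_props Hkj Hj Hs Hst.
  by exists (psi n j k w).
Qed.

End PF.
Import PF.

Import Order.TTheory GRing.Theory Num.Theory.
Local Open Scope ring_scope.

Theorem mainTheorem8 (n j k : nat) (hkj : (k <= j)%N) (hjn : (j <= n)%N) :
  f_poly [:: n; j; k] (j + k)%N =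
  'X^(j ^ 2 + j * k + k ^ 2)%N *
    (qbinom n%:Z j%:Z * qbinom n%:Z k%:Z
     - 'X^(j - k + 1)%N * qbinom n%:Z (j%:Z + 1) * qbinom n%:Z (k%:Z - 1)).
Proof.
have Hj1 : (j%:Z + 1 = (j.+1)%:Z)%R by rewrite -addn1 PoszD.
have Hk1 : qbinom n%:Z (k%:Z - 1) = qbm n k.
  case: k hkj => [|k'] _; first by rewrite sub0r qbinom_neg.
  have -> : ((k'.+1)%:Z - 1 = k'%:Z :> int) by rewrite -addn1 PoszD addrK.
  by rewrite qbinom_nat.
have He : (j - k + 1 = j.+1 - k)%N by lia.
rewrite Hj1 Hk1 He !qbinom_nat.
clear Hk1.
case: n hjn => [|n] hjn.
- have Ej : j = 0%N by lia.
  have Ek : k = 0%N by lia.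
  subst j k.
  rewrite /f_poly.
  have E0 : forall T : filling [:: 0%N; 0%N; 0%N], is_SYT T && (des T == (0 + 0)%N).
    move=> T; apply/andP; split; last by rewrite /des /descents.
    by apply/and5P; split; apply/forallP => -[a [b Hb]].
  rewrite (eq_bigl xpredT) // (eq_bigr (fun _ => 1)); last first.
    by move=> T _; rewrite /maj /descents.
  rewrite sumr_const card_ffun card_prod !card_ord /= expr0 mul1r.
  by rewrite /qbm /= mulr0 subr0 mulr1.
- have -> : [:: n.+1; j; k] = la3 n j k by [].
  rewrite f_poly_Fw // Fw_Rp //; lia.
Qed.
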